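(* Let $F:\mathbb{C}^n\to\mathbb{C}^n$ be a polynomial map of the form $F=\mathrm{Id}+H$, i.e. $F_i=X_i+H_i(X_1,\dots,X_n)$, where each $H_i$ is a polynomial of lower degree $d_i\ge2$, $1\le i\le n$. For each $i$, let $(P_k^i)_{k\ge0}$ be defined by $P_0^i=X_i$ and $P_k^i(X)=P_{k-1}^i(F_1,\dots,F_n)-P_{k-1}^i(X_1,\dots,X_n)$ for $k\ge1$. Then the following are equivalent: (a) $F$ is a quasi-translation; (b) $JH\cdot H=0$, where $JH=(\partial H_i/\partial X_j)_{i,j}$ is the Jacobian matrix of $H$ and $H$ is viewed as a column vector; (c) $P_2^i=0$ for all $1\le i\le n$.
   Context: A polynomial map $F=\mathrm{Id}+H:\mathbb{C}^n\to\mathbb{C}^n$ is a quasi-translation if it is invertible with polynomial inverse $F^{-1}=\mathrm{Id}-H$. The lower degree of a nonzero polynomial is the smallest degree of its nonzero homogeneous components. *)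

(* Defs.v *)
From HB Require Import structures.
From mathcomp Require Import all_boot all_algebra.
From mathcomp Require Import complex.
From mathcomp Require Import Rstruct.
From mathcomp Require Import mpoly.
From Stdlib Require Import Reals.

Set Implicit Arguments. Unset Strict Implicit. Unset Printing Implicit Defensive.
Import GRing.Theory.
Local Open Scope ring_scope.

Definition CC : numClosedFieldType := (R : rcfType)[i].

(* Lower degree of a polynomial: smallest total degree of a monomial occurring
   in p, i.e. smallest degree of a nonzero homogeneous component
   (only meaningful for p != 0; set to 0 for p = 0). *)
Definition lowdeg (n : nat) (p : {mpoly CC[n]}) : nat :=
  match msupp p with
  | [::] => 0%N
  | m :: s => foldr (fun m' d => minn (mdeg m') d) (mdeg m) s
  end.

Definition idplus (n : nat) (H : 'I_n -> {mpoly CC[n]}) : n.-tuple {mpoly CC[n]} :=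
  [tuple 'X_i + H i | i < n].

Definition idminus (n : nat) (H : 'I_n -> {mpoly CC[n]}) : n.-tuple {mpoly CC[n]} :=
  [tuple 'X_i - H i | i < n].

Definition pmap_comp (n : nat) (G F : n.-tuple {mpoly CC[n]}) : n.-tuple {mpoly CC[n]} :=
  [tuple comp_mpoly F (tnth G i) | i < n].

Definition pmap_id (n : nat) : n.-tuple {mpoly CC[n]} := [tuple 'X_i | i < n].

Definition quasi_translation (n : nat) (H : 'I_n -> {mpoly CC[n]}) : Prop :=
  pmap_comp (idplus H) (idminus H) = pmap_id n /\
  pmap_comp (idminus H) (idplus H) = pmap_id n.

Definition JH_H (n : nat) (H : 'I_n -> {mpoly CC[n]}) (i : 'I_n) : {mpoly CC[n]} :=
  \sum_(j < n) mderiv j (H i) * H j.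

Fixpoint Pk (n : nat) (H : 'I_n -> {mpoly CC[n]}) (i : 'I_n) (k : nat) : {mpoly CC[n]} :=
  match k with
  | 0%N => 'X_i
  | k'.+1 => comp_mpoly (idplus H) (Pk H i k') - Pk H i k'
  end.

(* Main.v *)
Require Import Defs.
From HB Require Import structures.
From mathcomp Require Import all_boot all_algebra.
From mathcomp Require Import complex.
From mathcomp Require Import Rstruct.
From mathcomp Require Import mpoly.
From Stdlib Require Import Reals.
Local Open Scope ring_scope.
Import GRing.Theory Num.Theory.

Section Aux.
Variable n : nat.
Local Notation MP := {mpoly CC[n]}.

Lemma mpoly_fun_eq (S : comNzRingType) (g1 g2 : MP -> S) :
  g1 0 = 0 -> g2 0 = 0 ->
  (forall p q, g1 (p + q) = g1 p + g1 q) -> (forall p q, g2 (p + q) = g2 p + g2 q) ->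
  (forall p q, g1 (p * q) = g1 p * g1 q) -> (forall p q, g2 (p * q) = g2 p * g2 q) ->
  (forall c, g1 c%:MP = g2 c%:MP) -> (forall i, g1 'X_i = g2 'X_i) -> g1 =1 g2.
Proof.
move=> h10 h20 h1D h2D h1M h2M hC hX.
have h1 : g1 1 = g2 1 by rewrite -mpolyC1 hC.
elim/mpolyind => [|c m p _ _ IH]; first by rewrite h10 h20.
rewrite h1D h2D IH -mul_mpolyC h1M h2M hC mpolyXE_id; congr (_ * _ + _).
apply: (big_ind2 (fun a b => g1 a = g2 b)) => // [x1 x2 y1 y2 e1 e2|i _].
  by rewrite h1M h2M e1 e2.
elim: (m i) => [|k IHk]; first by rewrite !expr0.
by rewrite !exprS h1M h2M IHk hX.
Qed.

Lemma mderivXU (i j : 'I_n) : mderiv j ('X_i : MP) = (i == j)%:R.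
Proof.
rewrite mderivX mnm1E; case: eqP => [->|_]; last by rewrite scale0r.
have -> : (U_(j) - U_(j))%MM = 0%MM :> 'X_{1..n}.
  by apply/mnmP => k; rewrite mnmBE subnn mnm0E.
by rewrite mpolyX0 scale1r.
Qed.

Variable H : 'I_n -> MP.
Definition T (c : CC) : n.-tuple MP := [tuple 'X_j + c *: H j | j < n].
Definition hh (j : 'I_n) : {poly MP} := ('X_j)%:P + 'X * (H j)%:P.
Definition Phi_def (p : MP) : {poly MP} := mmap (polyC \o (@mpolyC n CC)) hh p.
Fact Phi_key : unit. Proof. by []. Qed.
Definition Phi := locked_with Phi_key Phi_def.
Lemma PhiE p : Phi p = mmap (polyC \o (@mpolyC n CC)) hh p.
Proof. by rewrite /Phi unlock. Qed.

Lemma Phi0 : Phi 0 = 0. Proof. by rewrite PhiE mmap0. Qed.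
Lemma PhiD p q : Phi (p + q) = Phi p + Phi q. Proof. by rewrite !PhiE mmapD. Qed.
Lemma PhiM p q : Phi (p * q) = Phi p * Phi q. Proof. rewrite !PhiE; exact: (rmorphM (mmap (polyC \o (@mpolyC n CC)) hh)). Qed.
Lemma PhiC c : Phi c%:MP = (c%:MP)%:P.
Proof. by rewrite PhiE mmapC. Qed.
Lemma PhiX i : Phi 'X_i = hh i.
Proof. by rewrite PhiE mmapX mmap1U. Qed.
Lemma Phi_sum (I : Type) (r : seq I) (F : I -> MP) : Phi (\sum_(i <- r) F i) = \sum_(i <- r) Phi (F i).
Proof. exact: (big_morph Phi PhiD Phi0). Qed.

Lemma Phi_eval c p : (Phi p).[c%:MP] = p \mPo T c.
Proof.
apply: (@mpoly_fun_eq _ (fun p => (Phi p).[c%:MP]) (comp_mpoly (T c))) => //=.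
- by rewrite Phi0 horner0.
- exact: comp_mpoly0.
- by move=> p1 q1; rewrite PhiD hornerD.
- exact: comp_mpolyD.
- by move=> p1 q1; rewrite PhiM hornerM.
- exact: rmorphM.
- by move=> d; rewrite PhiC hornerC comp_mpolyC.
move=> i; rewrite PhiX comp_mpolyXU -tnth_nth tnth_mktuple /hh.
by rewrite hornerD hornerC hornerM hornerX hornerC mul_mpolyC.
Qed.

Definition Qd (p : MP) := (Phi p)^`() = \sum_(j < n) Phi (p^`M(j)) * (H j)%:P.
Lemma QD p q : Qd p -> Qd q -> Qd (p + q).
Proof.
rewrite /Qd => hp hq; rewrite PhiD derivD hp hq -big_split /=.
by apply: eq_bigr => j _; rewrite mderivD PhiD mulrDl.
Qed.

Lemma QM p q : Qd p -> Qd q -> Qd (p * q).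
Proof.
rewrite /Qd => hp hq; rewrite PhiM derivM hp hq mulr_suml mulr_sumr -big_split /=.
apply: eq_bigr => j _; rewrite mderivM PhiD !PhiM mulrDl.
by congr (_ + _); rewrite -!mulrA; congr (_ * _); rewrite mulrC.
Qed.

Lemma QC c : Qd c%:MP.
Proof.
rewrite /Qd PhiC derivC big1 // => j _; by rewrite mderivC -mpolyC0 PhiC mul0r.
Qed.

Lemma QX i : Qd 'X_i.
Proof.
rewrite /Qd PhiX /hh derivD derivC add0r derivM derivX derivC mulr0 addr0 mul1r.
rewrite (bigD1 i) //= big1 ?addr0 => [|j nji]; last first.
  have -> : ('X_i : MP)^`M(j) = 0 by rewrite mderivXU eq_sym (negbTE nji).
  by rewrite Phi0 mul0r.
have -> : ('X_i : MP)^`M(i) = 1 by rewrite mderivXU eqxx.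
by rewrite -mpolyC1 PhiC mpolyC1 polyC1 mul1r.
Qed.

Lemma Qall p : Qd p.
Proof.
elim/mpolyind: p => [|c m p _ _ IH]; first by rewrite -mpolyC0; apply: QC.
apply: QD => //; rewrite -mul_mpolyC mpolyXE_id; apply: QM; first exact: QC.
apply: (big_ind Qd) => //; [by rewrite -mpolyC1; apply: QC | exact: QM |].
move=> i _; elim: (m i) => [|k IHk]; first by rewrite expr0 -mpolyC1; apply: QC.
by rewrite exprS; apply: QM => //; apply: QX.
Qed.

Lemma T0 : T 0 = [tuple 'X_i | i < n].
Proof. by apply: eq_from_tnth => i; rewrite !tnth_mktuple scale0r addr0. Qed.

Lemma Phi_eval0 p : (Phi p).[0] = p.
Proof. by rewrite -mpolyC0 Phi_eval T0 comp_mpoly_id. Qed.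

Lemma J_impl (hJ : forall i, JH_H H i = 0) c i : H i \mPo T c = H i.
Proof.
pose E j := Phi (H j) - (H j)%:P.
have hE0 j : (E j)`_0 = 0.
  by rewrite -horner_coef0 /E hornerD hornerN hornerC Phi_eval0 subrr.
have hdE j : (E j)^`() = - \sum_(l < n) Phi ((H j)^`M(l)) * E l.
  have hz : \sum_(l < n) Phi ((H j)^`M(l)) * Phi (H l) = 0.
    transitivity (Phi (JH_H H j)); last by rewrite hJ Phi0.
    rewrite /JH_H Phi_sum; apply: eq_bigr => l _; by rewrite PhiM.
  rewrite /E derivB derivC subr0 Qall.
  rewrite [in RHS](eq_bigr (fun l => Phi ((H j)^`M(l)) * Phi (H l) - Phi ((H j)^`M(l)) * (H l)%:P)); last by move=> l _ /=; rewrite mulrBr.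
  by rewrite sumrB hz sub0r opprK.
have hcoef k : forall j, (E j)`_k = 0.
  elim/ltn_ind: k => k IH j; case: k IH => [|k] IH; first exact: hE0.
  have : (E j)^`()`_k = 0.
    rewrite hdE coefN coef_sum big1 ?oppr0 // => l _.
    rewrite coefM big1 // => m _; rewrite IH ?mulr0 //.
    by rewrite ltnS leq_subr.
  rewrite coef_deriv => /eqP; rewrite -mulr_natr mulf_eq0 => /orP [/eqP //|].
  by rewrite -mpolyC_nat mpolyC_eq0 pnatr_eq0.
have hA : Phi (H i) = (H i)%:P.
  apply/eqP; rewrite -subr_eq0; apply/eqP/polyP => k; rewrite coef0; exact: hcoef.
by rewrite -Phi_eval hA hornerC.
Qed.

Lemma P1_impl (h1 : forall i, H i \mPo T 1 = H i) i : JH_H H i = 0.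
Proof.
have hm m : forall j, H j \mPo T m%:R = H j.
  elim: m => [|m IHm] j; first by rewrite T0 comp_mpoly_id.
  have comp p : (p \mPo T m%:R) \mPo T 1 = p \mPo T m.+1%:R.
    apply: (@mpoly_fun_eq _ (fun p => (p \mPo T m%:R) \mPo T 1) (comp_mpoly (T m.+1%:R))).
    - by cbv beta; rewrite !comp_mpoly0.
    - exact: comp_mpoly0.
    - by move=> p1 q1; cbv beta; rewrite !comp_mpolyD.
    - exact: comp_mpolyD.
    - by move=> p1 q1; cbv beta; rewrite !rmorphM.
    - exact: rmorphM.
    - by move=> d; cbv beta; rewrite !comp_mpolyC.
    move=> l; cbv beta; rewrite !comp_mpolyXU -!tnth_nth !tnth_mktuple comp_mpolyD comp_mpolyZ.
    rewrite comp_mpolyXU -tnth_nth tnth_mktuple h1 scale1r.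
    by rewrite mulrS scalerDl scale1r addrA.
  by rewrite -comp IHm h1.
pose E := Phi (H i) - (H i)%:P.
have hE : E = 0.
  apply/eqP; apply: contraT => nzE.
  have := @max_poly_roots _ E [seq (m%:R : CC)%:MP | m <- iota 0 (size E)] nzE.
  rewrite size_map size_iota ltnn; apply.
    apply/allP => x /mapP [m _ ->].
    by rewrite /root /E hornerD hornerN hornerC Phi_eval hm subrr.
  rewrite map_inj_uniq ?iota_uniq // => a b /eqP.
  by rewrite mpolyC_eq eqr_nat => /eqP.
have hd : (Phi (H i))^`() = 0.
  by move/eqP: hE; rewrite subr_eq0 => /eqP ->; rewrite derivC.
have := congr1 (fun q => q.[0]) hd; rewrite /= Qall horner_sum horner0 => <-.
apply: eq_bigr => j _; by rewrite hornerM hornerC Phi_eval0.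
Qed.
End Aux.
Arguments T {n} H c.

Lemma idplusT n (H : 'I_n -> {mpoly CC[n]}) : idplus H = T H 1.
Proof. by apply: eq_from_tnth => i; rewrite !tnth_mktuple scale1r. Qed.

Lemma idminusT n (H : 'I_n -> {mpoly CC[n]}) : idminus H = T H (-1).
Proof. by apply: eq_from_tnth => i; rewrite !tnth_mktuple scaleN1r. Qed.

Lemma pmap_id_iff n (G F : n.-tuple {mpoly CC[n]}) :
  pmap_comp G F = pmap_id n <-> forall i, tnth G i \mPo F = 'X_i.
Proof.
split=> [h i | h].
  by have := congr1 (fun t => tnth t i) h; rewrite !tnth_mktuple.
by apply: eq_from_tnth => i; rewrite !tnth_mktuple.
Qed.

Lemma L1 n (a b q : {mpoly CC[n]}) : a + b - q = a -> q = b.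
Proof. move=> h; apply/eqP; rewrite -subr_eq0 -oppr_eq0 opprB; apply/eqP; apply: (addrI a). by rewrite addr0 addrA h. Qed.
Lemma L2 n (a b q : {mpoly CC[n]}) : a - b + q = a -> q = b.
Proof. move=> h; apply: (addrI (a - b)). by rewrite h subrK. Qed.

Lemma qt_iff n (H : 'I_n -> {mpoly CC[n]}) :
  quasi_translation H <->
  (forall i, H i \mPo idplus H = H i) /\ (forall i, H i \mPo idminus H = H i).
Proof.
have e1 i : tnth (idplus H) i \mPo idminus H = 'X_i - H i + (H i \mPo idminus H).
  by rewrite tnth_mktuple comp_mpolyD comp_mpolyXU -tnth_nth tnth_mktuple.
have e2 i : tnth (idminus H) i \mPo idplus H = 'X_i + H i - (H i \mPo idplus H).
  by rewrite tnth_mktuple comp_mpolyB comp_mpolyXU -tnth_nth tnth_mktuple.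
rewrite /quasi_translation; split=> [[h1 h2]|[h1 h2]].
  move/pmap_id_iff: h1 => h1; move/pmap_id_iff: h2 => h2; split=> i.
  - by have := h2 i; rewrite e2 => /L1.
  - by have := h1 i; rewrite e1 => /L2.
split; apply/pmap_id_iff => i.
- by rewrite e1 h2 subrK.
- by rewrite e2 h1 addrK.
Qed.

Lemma Pk2 n (H : 'I_n -> {mpoly CC[n]}) i : Pk H i 2 = (H i \mPo idplus H) - H i.
Proof.
have P1 : ('X_i \mPo idplus H) - 'X_i = H i.
  by rewrite comp_mpolyXU -tnth_nth tnth_mktuple addrAC subrr add0r.
have PkS k : Pk H i k.+1 = (Pk H i k \mPo idplus H) - Pk H i k by [].
have P1' : Pk H i 1 = H i by rewrite PkS P1.
by rewrite PkS P1'.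
Qed.

Theorem proposition2p7 (n : nat) (H : 'I_n -> {mpoly CC[n]})
    (hH : forall i, H i != 0 /\ (2 <= lowdeg (H i))%nat) :
  (quasi_translation H <-> (forall i, JH_H H i = 0)) /\
  ((forall i, JH_H H i = 0) <-> (forall i, Pk H i 2 = 0)).
Proof.
have c_iff : (forall i, Pk H i 2 = 0) <-> (forall i, H i \mPo idplus H = H i).
  split=> h i; have := h i; rewrite Pk2.
    by move/eqP; rewrite subr_eq0 => /eqP.
  by move->; rewrite subrr.
have P1' : (forall i, H i \mPo idplus H = H i) -> forall i, JH_H H i = 0.
  move=> h1; apply: P1_impl => i; rewrite -idplusT; exact: h1.
have J1 : (forall i, JH_H H i = 0) -> forall i, H i \mPo idplus H = H i.
  by move=> hJ i; rewrite idplusT; apply: J_impl.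
have Jm1 : (forall i, JH_H H i = 0) -> forall i, H i \mPo idminus H = H i.
  by move=> hJ i; rewrite idminusT; apply: J_impl.
split; split.
- by move/qt_iff => [h1 _]; apply: P1'.
- by move=> hJ; apply/qt_iff; split; [apply: J1 | apply: Jm1].
- by move=> hJ; apply/c_iff; apply: J1.
- by move/c_iff; apply: P1'.
Qed.
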